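(* Let $\mathsf M$ be an oriented matroid with set of topes $\mathcal T$ and tope-pairs poset $\mathcal Q$. For $(R,T)\in\mathcal Q$ set $\rho(R,T):=(-T,R)$. Then $\rho$ is a poset isomorphism $\mathcal Q\to\mathcal Q^{op}$, and $\rho^4=\mathrm{id}$.
   Context: Topes of an oriented matroid on ground set $E$ are sign vectors in $\{+,-,0\}^E$ (the maximal covectors); $-T$ is componentwise negation, and the negative of a tope is a tope. The separating set of sign vectors is $S(X,Y)=\{e\in E: X_e=-Y_e\neq0\}$; for a tope $B$, $T\le_B R$ iff $S(B,T)\subseteq S(B,R)$. The tope-pairs poset $\mathcal Q$ is $\mathcal T\times\mathcal T$ with $(T,R)\le(T',R')$ iff $T\le_{T'}R\le_{T'}R'$. $\mathcal Q^{op}$ is the same set with the reversed order. *)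

(* Defs.v *)
From HB Require Import structures.
From mathcomp Require Import all_boot.
Set Implicit Arguments. Unset Strict Implicit. Unset Printing Implicit Defensive.

Inductive sign := Plus | Minus | Zero.

Definition sign_to_ord (s : sign) : 'I_3 :=
  match s with Plus => inord 0 | Minus => inord 1 | Zero => inord 2 end.
Definition ord_to_sign (i : 'I_3) : sign :=
  match val i with 0 => Plus | 1 => Minus | _ => Zero end.
Lemma sign_to_ordK : cancel sign_to_ord ord_to_sign.
Proof. by case; rewrite /ord_to_sign /= inordK. Qed.
HB.instance Definition _ := Finite.copy sign (can_type sign_to_ordK).

Definition sopp (s : sign) : sign :=
  match s with Plus => Minus | Minus => Plus | Zero => Zero end.

Definition svec (E : finType) := {ffun E -> sign}.

Definition sneg (E : finType) (X : svec E) : svec E := [ffun e => sopp (X e)].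
Definition szero (E : finType) : svec E := [ffun _ => Zero].
Definition scomp (E : finType) (X Y : svec E) : svec E :=
  [ffun e => if X e == Zero then Y e else X e].

Definition sep (E : finType) (X Y : svec E) : {set E} :=
  [set e | (X e == sopp (Y e)) && (X e != Zero)].

Definition sle (E : finType) (X Y : svec E) : bool :=
  [forall e, (X e == Zero) || (X e == Y e)].

Record oriented_matroid (E : finType) (L : {set svec E}) : Prop := {
  om_zero : szero E \in L;
  om_neg  : forall X, X \in L -> sneg X \in L;
  om_comp : forall X Y, X \in L -> Y \in L -> scomp X Y \in L;
  om_elim : forall X Y e, X \in L -> Y \in L -> e \in sep X Y ->
      exists2 Z, Z \in L &
        (Z e = Zero /\ forall f, f \notin sep X Y -> Z f = scomp X Y f)
}.

Definition tope (E : finType) (L : {set svec E}) (T : svec E) : Prop :=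
  T \in L /\ forall Y, Y \in L -> sle T Y -> Y = T.

Definition tle (E : finType) (B T R : svec E) : bool :=
  sep B T \subset sep B R.

Definition Qle (E : finType) (p q : svec E * svec E) : bool :=
  tle q.1 p.1 p.2 && tle q.1 p.2 q.2.

Definition rho (E : finType) (p : svec E * svec E) : svec E * svec E :=
  (sneg p.2, p.1).

(* Main.v *)
Require Import Defs.
From mathcomp Require Import all_boot.

Definition sbeq (a b : sign) : bool :=
  match a, b with Plus, Plus | Minus, Minus | Zero, Zero => true | _, _ => false end.
Lemma seqE (a b : sign) : (a == b) = sbeq a b.
Proof. by apply/eqP/idP; case: a; case: b. Qed.

Lemma snegK (E : finType) (X : svec E) : sneg (sneg X) = X.
Proof. by apply/ffunP=> e; rewrite !ffunE; case: (X e). Qed.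

Lemma sle_neg (E : finType) (X Y : svec E) : sle (sneg X) (sneg Y) = sle X Y.
Proof.
apply/forallP/forallP=> H e; move: (H e); rewrite ?ffunE !seqE;
  by case: (X e); case: (Y e).
Qed.

Lemma tope_neg (E : finType) (L : {set svec E}) T :
  oriented_matroid L -> tope L T -> tope L (sneg T).
Proof.
move=> om [TL Tm]; split; first exact: om_neg.
move=> Y YL HY; have := Tm (sneg Y) (om_neg om YL).
rewrite -sle_neg snegK => /(_ HY) <-; by rewrite snegK.
Qed.

Lemma tope_supp (E : finType) (L : {set svec E}) T X e :
  oriented_matroid L -> tope L T -> X \in L -> T e = Zero -> X e = Zero.
Proof.
move=> om [TL Tm] XL Te.
have C := om_comp om TL XL.
have : sle T (scomp T X).
  by apply/forallP=> f; rewrite ffunE !seqE; case: (T f).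
move=> /(Tm _ C) Heq; move: (congr1 (fun F : svec E => F e) Heq).
by rewrite ffunE Te eqxx.
Qed.

Lemma sub_sepE (E : finType) (X Y Z : svec E) :
  (sep X Y \subset sep X Z) =
  [forall e, ((X e == sopp (Y e)) && (X e != Zero)) ==> ((X e == sopp (Z e)) && (X e != Zero))].
Proof.
apply/subsetP/forallP=> H e.
  by apply/implyP=> h; have := H e; rewrite !inE; apply.
by rewrite !inE; move/implyP: (H e).
Qed.

Lemma local a b c d :
  (a == Zero) = (b == Zero) -> (b == Zero) = (c == Zero) -> (c == Zero) = (d == Zero) ->
  ((((c == sopp a) && (c != Zero)) ==> ((c == sopp b) && (c != Zero))) =
   (((sopp b == sopp c) && (sopp b != Zero)) ==> ((sopp b == sopp a) && (sopp b != Zero)))) /\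
  ((((c == sopp b) && (c != Zero)) ==> ((c == sopp d) && (c != Zero))) =
   (((sopp b == sopp (sopp d)) && (sopp b != Zero)) ==> ((sopp b == sopp c) && (sopp b != Zero)))).
Proof. by rewrite !seqE; case: a; case: b; case: c; case: d. Qed.

Theorem lemma3p13 (E : finType) (L : {set svec E}) :
  oriented_matroid L ->
  (* rho maps Q = T x T into Q *)
  (forall R T : svec E, tope L R -> tope L T -> tope L (rho (R, T)).1 /\ tope L (rho (R, T)).2) /\
  (* rho is injective on Q *)
  (forall p q : svec E * svec E, tope L p.1 -> tope L p.2 -> tope L q.1 -> tope L q.2 ->
     rho p = rho q -> p = q) /\
  (* rho is surjective onto Q *)
  (forall q : svec E * svec E, tope L q.1 -> tope L q.2 ->
     exists p, [/\ tope L p.1, tope L p.2 & rho p = q]) /\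
  (* rho is an order isomorphism Q -> Q^op *)
  (forall p q : svec E * svec E, tope L p.1 -> tope L p.2 -> tope L q.1 -> tope L q.2 ->
     Qle p q = Qle (rho q) (rho p)) /\
  (* rho^4 = id *)
  (forall p : svec E * svec E, rho (rho (rho (rho p))) = p).
Proof.
move=> om; split; [|split; [|split; [|split]]].
- by move=> R T HR HT; split=> //=; apply: tope_neg.
- case=> a b [c d] /= _ _ _ _ [h1 h2].
  by rewrite h2 -(@snegK _ b) h1 snegK.
- case=> a b /= Ha Hb; exists (b, sneg a); split=> //=; first exact: tope_neg.
  by rewrite /rho /= snegK.
- case=> a b [c d] /= Ha Hb Hc Hd.
  have Z : forall (X Y : svec E) (e : E), tope L X -> tope L Y -> (X e == Zero) = (Y e == Zero).
    move=> X Y e HX HY; apply/eqP/eqP=> h.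
      exact: (@tope_supp _ _ _ _ _ om HX HY.1 h).
    exact: (@tope_supp _ _ _ _ _ om HY HX.1 h).
  rewrite /Qle /tle /= !sub_sepE.
  have Hl : forall e, _ := fun e => @local _ _ _ _ (Z a b e Ha Hb) (Z b c e Hb Hc) (Z c d e Hc Hd).
  rewrite andbC; congr andb; apply: eq_forallb=> e; rewrite !ffunE;
    by case: (Hl e).
- by case=> a b; rewrite /rho /= !snegK.
Qed.
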